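(* Let $A\in\mathbb{R}^{n\times n}$, $1\le K<n$, $\lambda>0$, and $g\in\mathcal{G}$ with Lipschitz constant $\ell>0$ for $g'$, and set $\rho=3\lambda\ell$. For the ADMM iterates $\{(X_k,Y_k,\Lambda_k)\}$ described in the context (arbitrary initialization), for every $k\ge 1$, $$\mathcal{L}_\rho(X_k,Y_k,\Lambda_k)-\mathcal{L}_\rho(X_{k+1},Y_{k+1},\Lambda_{k+1})\ge \frac{7\ell\lambda}{6}\|Y_{k+1}-Y_k\|_F^2 .$$
   Context: $\mathcal{P}_K$ denotes the set of real symmetric $n\times n$ matrices $X$ with $X^2=X$ and $\mathrm{rank}(X)=K$. $\mathcal{G}$ is the class of functions $g:\mathbb{R}\to\mathbb{R}$ that are continuously differentiable, nonnegative, convex, and satisfy $|g'(x_1)-g'(x_2)|\le \ell|x_1-x_2|$ for all $x_1,x_2$. $\langle M,N\rangle=\mathrm{trace}(M^TN)$, $\|\cdot\|_F$ is the Frobenius norm. The augmented Lagrangian is $\mathcal{L}_\rho(X,Y,\Lambda)=\|A-X\|_F^2+\lambda\sum_{i,j}g(Y_{ij})+\frac{\rho}{2}\|X-Y\|_F^2+\langle\Lambda,X-Y\rangle$. The ADMM iteration is: $X_{k+1}\in\arg\min_{X\in\mathcal{P}_K}\mathcal{L}_\rho(X,Y_k,\Lambda_k)$; $Y_{k+1}=\arg\min_{Y\in\mathbb{R}^{n\times n}}\mathcal{L}_\rho(X_{k+1},Y,\Lambda_k)$; $\Lambda_{k+1}=\Lambda_k+\rho(X_{k+1}-Y_{k+1})$.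 *)

(* Defs.v *)
From mathcomp Require Import all_boot all_algebra.
From mathcomp Require Import all_classical all_reals all_analysis.
Set Implicit Arguments. Unset Strict Implicit. Unset Printing Implicit Defensive.
Import GRing.Theory Num.Theory.
Import numFieldNormedType.Exports.
Local Open Scope ring_scope.

Definition frob2 (R : realType) (n : nat) (M : 'M[R]_n) : R :=
  \sum_(i < n) \sum_(j < n) (M i j) ^+ 2.

Definition minner (R : realType) (n : nat) (M N : 'M[R]_n) : R :=
  \tr (M^T *m N).

Definition in_PK (R : realType) (n K : nat) (X : 'M[R]_n) : Prop :=
  X^T = X /\ X *m X = X /\ \rank X = K.

Definition classG (R : realType) (g : R -> R) (ell : R) : Prop :=
  (forall x : R, derivable g x 1) /\
  (forall x : R, {for x, continuous (derive1 g)}) /\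
  (forall x : R, 0 <= g x) /\
  (forall (x y t : R), 0 <= t <= 1 ->
      g (t * x + (1 - t) * y) <= t * g x + (1 - t) * g y) /\
  (forall x1 x2 : R, `| (derive1 g) x1 - (derive1 g) x2 | <= ell * `| x1 - x2 |).

Definition Lagr (R : realType) (n : nat) (A : 'M[R]_n) (lam : R) (g : R -> R)
  (rho : R) (X Y L : 'M[R]_n) : R :=
  frob2 (A - X) + lam * (\sum_(i < n) \sum_(j < n) g (Y i j))
  + rho / 2 * frob2 (X - Y) + minner L (X - Y).

(* Main.v *)
Require Import Defs.
From mathcomp Require Import all_boot all_algebra.
From mathcomp Require Import all_classical all_reals all_analysis.
Import GRing.Theory Num.Theory.
Local Open Scope ring_scope.
From mathcomp Require Import ring lra.
Import order.Order.TTheory numFieldNormedType.Exports.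
Lemma fermat (R : realType) (g : R -> R) (lam rho m y : R) :
  (forall x, derivable g x 1) ->
  (forall s, lam * g y + rho / 2 * (y * y) - m * y <= lam * g s + rho / 2 * (s * s) - m * s) ->
  lam * derive1 g y + rho * y - m = 0.
Proof.
move=> dg hmin.
set f := fun s => lam * g s + rho / 2 * (s * s) - m * s.
have h0 : is_derive y 1 f 0.
  apply: (@derive1_at_min _ f (y - 1) (y + 1) y).
  - lra.
  - move=> t _.
    have dgt : is_derive t 1 g ('D_1 g t) by apply: derivableP.
    have [H _] := ((is_deriveB (is_deriveD (is_deriveM (is_derive_cst lam t 1) dgt)
     (is_deriveM (is_derive_cst (rho/2) t 1) (is_deriveM (@is_derive_id _ _ t 1) (@is_derive_id _ _ t 1))))
     (is_deriveM (is_derive_cst m t 1) (@is_derive_id _ _ t 1)))).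
    exact H.
  - rewrite in_itv /=; apply/andP; split; lra.
  - move=> t _; exact: hmin.
have dgy : is_derive y 1 g (derive1 g y).
  rewrite derive1E. exact: derivableP.
have h1 := is_deriveB (is_deriveD (is_deriveM (is_derive_cst lam y 1) dgy)
     (is_deriveM (is_derive_cst (rho/2) y 1) (is_deriveM (@is_derive_id _ _ y 1) (@is_derive_id _ _ y 1))))
     (is_deriveM (is_derive_cst m y 1) (@is_derive_id _ _ y 1)).
have e0 := @derive_val _ _ _ _ _ _ _ h0.
have e1 := @derive_val _ _ _ _ _ _ _ h1.
have E : 0 = cst lam y *: g^`()%classic y + g y *: 0 +
       (cst (rho / 2) y *: (y%:A + y%:A) + (id * id) y *: 0) -
       ((cst m y)%:A + y *: 0).
  rewrite -e1 -e0. reflexivity.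
rewrite !scaler0 !addr0 /cst in E.
rewrite /= -[y%:A]/(y * 1) -[m%:A]/(m * 1) in E.
change (0 = lam * g^`()%classic y + (rho / 2) * (y * 1 + y * 1) - m * 1) in E.
lra.
Qed.

Lemma limit_t (R : realFieldType) (a c : R) :
  (forall t, 0 < t -> t <= 1 -> c * (1 - t) <= a) -> c <= a.
Proof.
move=> H.
have a0 : 0 <= a by have h := H 1 ltr01; rewrite subrr mulr0 in h; apply: h; lra.
case: (lerP c a) => // hca.
have c0 : 0 < c by lra.
have t0 : 0 < (c - a) / (2 * c) by apply: divr_gt0; lra.
have t1 : (c - a) / (2 * c) <= 1 by rewrite ler_pdivrMr; lra.
have := H _ t0 t1.
have -> : c * (1 - (c - a) / (2 * c)) = (c + a) / 2.
  by field; apply/eqP; lra.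
lra.
Qed.

Lemma strong (R : realType) (g : R -> R) (lam rho x l y z : R) :
  0 < lam -> 0 <= rho ->
  (forall (x y t : R), 0 <= t <= 1 ->
      g (t * x + (1 - t) * y) <= t * g x + (1 - t) * g y) ->
  (forall s, lam * g y + rho / 2 * (x - y) ^+ 2 + l * (x - y) <=
             lam * g s + rho / 2 * (x - s) ^+ 2 + l * (x - s)) ->
  rho / 2 * (z - y) ^+ 2 <=
  (lam * g z + rho / 2 * (x - z) ^+ 2 + l * (x - z)) -
  (lam * g y + rho / 2 * (x - y) ^+ 2 + l * (x - y)).
Proof.
move=> lam0 rho0 conv hmin.
apply: limit_t => t t0 t1.
have hc := conv z y t.
have hc' : g (t * z + (1 - t) * y) <= t * g z + (1 - t) * g y.
  by apply: hc; apply/andP; split; lra.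
have hm := hmin (t * z + (1 - t) * y).
have hl := ler_wpM2l (ltW lam0) hc'.
have E0 : 0 <= (lam * g (t * z + (1 - t) * y) + rho / 2 * (x - (t * z + (1 - t) * y)) ^+ 2
     + l * (x - (t * z + (1 - t) * y))) - (lam * g y + rho / 2 * (x - y) ^+ 2 + l * (x - y))
     + (lam * (t * g z + (1 - t) * g y) - lam * g (t * z + (1 - t) * y)) by lra.
set a := (lam * g z + rho / 2 * (x - z) ^+ 2 + l * (x - z)) -
  (lam * g y + rho / 2 * (x - y) ^+ 2 + l * (x - y)).
have key : t * (a - rho / 2 * (z - y) ^+ 2 * (1 - t)) = (lam * g (t * z + (1 - t) * y) + rho / 2 * (x - (t * z + (1 - t) * y)) ^+ 2
     + l * (x - (t * z + (1 - t) * y))) - (lam * g y + rho / 2 * (x - y) ^+ 2 + l * (x - y))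
     + (lam * (t * g z + (1 - t) * g y) - lam * g (t * z + (1 - t) * y)).
  rewrite /a. ring.
have : 0 <= a - rho / 2 * (z - y) ^+ 2 * (1 - t).
  by rewrite -(pmulr_rge0 _ t0) key.
lra.
Qed.

Lemma fermat2 (R : realType) (g : R -> R) (lam rho x l y : R) :
  (forall x, derivable g x 1) ->
  (forall s, lam * g y + rho / 2 * (x - y) ^+ 2 + l * (x - y) <=
             lam * g s + rho / 2 * (x - s) ^+ 2 + l * (x - s)) ->
  lam * derive1 g y = l + rho * (x - y).
Proof.
move=> dg hmin.
have := @fermat R g lam rho (rho * x + l) y dg.
have H : forall s, lam * g y + rho / 2 * (y * y) - (rho * x + l) * y <=
      lam * g s + rho / 2 * (s * s) - (rho * x + l) * s.
  move=> s; have := hmin s.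
  have -> : lam * g y + rho / 2 * (x - y) ^+ 2 + l * (x - y) =
    (lam * g y + rho / 2 * (y * y) - (rho * x + l) * y) + (rho / 2 * x ^+ 2 + l * x) by field.
  have -> : lam * g s + rho / 2 * (x - s) ^+ 2 + l * (x - s) =
    (lam * g s + rho / 2 * (s * s) - (rho * x + l) * s) + (rho / 2 * x ^+ 2 + l * x) by field.
  by rewrite lerD2r.
move=> /(_ H) E.
lra.
Qed.

Lemma pointwise (R : realType) (g : R -> R) (lam ell rho a x0 x1 y0 y1 lm l0 l1 : R) :
  0 < lam -> 0 < ell -> rho = 3 * lam * ell ->
  (forall x, derivable g x 1) ->
  (forall (x y t : R), 0 <= t <= 1 ->
      g (t * x + (1 - t) * y) <= t * g x + (1 - t) * g y) ->
  (forall x1 x2 : R, `| (derive1 g) x1 - (derive1 g) x2 | <= ell * `| x1 - x2 |) ->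
  (forall s, lam * g y1 + rho / 2 * (x1 - y1) ^+ 2 + l0 * (x1 - y1) <=
             lam * g s + rho / 2 * (x1 - s) ^+ 2 + l0 * (x1 - s)) ->
  (forall s, lam * g y0 + rho / 2 * (x0 - y0) ^+ 2 + lm * (x0 - y0) <=
             lam * g s + rho / 2 * (x0 - s) ^+ 2 + lm * (x0 - s)) ->
  l0 = lm + rho * (x0 - y0) -> l1 = l0 + rho * (x1 - y1) ->
  7 * ell * lam / 6 * (y1 - y0) ^+ 2 <=
  ((a - x1) ^+ 2 + lam * g y0 + rho / 2 * (x1 - y0) ^+ 2 + l0 * (x1 - y0)) -
  ((a - x1) ^+ 2 + lam * g y1 + rho / 2 * (x1 - y1) ^+ 2 + l1 * (x1 - y1)).
Proof.
move=> lam0 ell0 erho dg conv lip h1 h0 el0 el1.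
have rho0 : 0 < rho by rewrite erho; apply: mulr_gt0 => //; apply: mulr_gt0.
have F1 := @fermat2 _ _ _ _ _ _ _ dg h1.
have F0 := @fermat2 _ _ _ _ _ _ _ dg h0.
have S := @strong _ g lam rho x1 l0 y1 y0 lam0 (ltW rho0) conv h1.
have L := lip y1 y0.
set u := derive1 g y1 - derive1 g y0 in L.
set d := y1 - y0 in L.
have L2 : u ^+ 2 <= ell ^+ 2 * d ^+ 2.
  rewrite -(real_normK (num_real u)) -(real_normK (num_real d)) -exprMn.
  have p : 0 <= ell * `|d| by apply: mulr_ge0 => //; exact: ltW.
  by rewrite ler_sqr ?nnegrE.
have Ed : l1 - l0 = lam * u by rewrite /u mulrBr F1 F0; lra.
have Ex : rho * (x1 - y1) = lam * u by lra.
have K : (l1 - l0) * (x1 - y1) * (3 * lam * ell) = (lam * u) ^+ 2.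
  by rewrite -erho Ed -Ex; ring.
have K2 : (l1 - l0) * (x1 - y1) * (3 * lam * ell) <= lam ^+ 2 * ell ^+ 2 * d ^+ 2.
  by rewrite K exprMn -mulrA ler_wpM2l // sqr_ge0.
have K3 : (l1 - l0) * (x1 - y1) <= lam * ell / 3 * d ^+ 2.
  have p : 0 < 3 * lam * ell by apply: mulr_gt0 => //; apply: mulr_gt0.
  rewrite -(ler_pM2r p).
  have -> : lam * ell / 3 * d ^+ 2 * (3 * lam * ell) = lam ^+ 2 * ell ^+ 2 * d ^+ 2 by field.
  exact: K2.
have Dd : (y0 - y1) ^+ 2 = d ^+ 2 by rewrite /d; ring.
rewrite erho Dd in S.
rewrite -/d erho.
set q := lam * ell * d ^+ 2.
have E1 : 7 * ell * lam / 6 * d ^+ 2 = 7 / 6 * q by rewrite /q; ring.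
have E2 : 3 * lam * ell / 2 * d ^+ 2 = 3 / 2 * q by rewrite /q; ring.
have E3 : lam * ell / 3 * d ^+ 2 = 1 / 3 * q by rewrite /q; ring.
rewrite E2 in S; rewrite E3 in K3; rewrite E1.
set P := (l1 - l0) * (x1 - y1) in K3.
have E4 : (a - x1) ^+ 2 + lam * g y0 + 3 * lam * ell / 2 * (x1 - y0) ^+ 2 + l0 * (x1 - y0) -
  ((a - x1) ^+ 2 + lam * g y1 + 3 * lam * ell / 2 * (x1 - y1) ^+ 2 + l1 * (x1 - y1)) =
  (lam * g y0 + 3 * lam * ell / 2 * (x1 - y0) ^+ 2 + l0 * (x1 - y0) -
    (lam * g y1 + 3 * lam * ell / 2 * (x1 - y1) ^+ 2 + l0 * (x1 - y1))) - P by rewrite /P; ring.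
rewrite E4. lra.
Qed.

Lemma minnerE (R : realType) (n : nat) (L M : 'M[R]_n) :
  minner L M = \sum_(i < n) \sum_(j < n) L i j * M i j.
Proof.
rewrite /minner /mxtrace.
under eq_bigr => i _ do (rewrite mxE; under eq_bigr => j _ do rewrite mxE).
by rewrite exchange_big.
Qed.

Definition T (R : realType) (lam : R) (g : R -> R) (rho a x y l : R) :=
  (a - x) ^+ 2 + lam * g y + rho / 2 * (x - y) ^+ 2 + l * (x - y).
Arguments T {R}.

Lemma LagrE (R : realType) (n : nat) (A : 'M[R]_n) (lam : R) (g : R -> R)
  (rho : R) (X Y L : 'M[R]_n) :
  Lagr A lam g rho X Y L =
  \sum_(i < n) \sum_(j < n) T lam g rho (A i j) (X i j) (Y i j) (L i j).
Proof.
rewrite /Lagr /frob2 minnerE !mulr_sumr -!big_split /=.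
apply: eq_bigr => i _.
rewrite !mulr_sumr -!big_split /=.
apply: eq_bigr => j _.
by rewrite /T !mxE.
Qed.

Lemma single (R : realType) (n : nat) (F G : 'I_n -> 'I_n -> R) (i j : 'I_n) :
  (forall p q, (p != i) || (q != j) -> F p q = G p q) ->
  \sum_(p < n) \sum_(q < n) F p q - \sum_(p < n) \sum_(q < n) G p q = F i j - G i j.
Proof.
move=> H.
have E : forall p, p != i -> \sum_(q < n) F p q - \sum_(q < n) G p q = 0.
  by move=> p pi; rewrite -sumrB big1 // => q _; rewrite H ?subrr // pi.
rewrite -sumrB (bigD1 i) //=.
rewrite [X in _ + X]big1 ?addr0; last by move=> p; exact: E.
rewrite -sumrB (bigD1 j) //= [X in _ + X]big1 ?addr0 // => q qj.
by rewrite H ?subrr // qj orbT.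
Qed.

Lemma entry_min (R : realType) (n : nat) (A : 'M[R]_n) (lam : R) (g : R -> R)
  (rho : R) (X Y L : 'M[R]_n) (i j : 'I_n) :
  (forall Z, Lagr A lam g rho X Y L <= Lagr A lam g rho X Z L) ->
  forall s, lam * g (Y i j) + rho / 2 * (X i j - Y i j) ^+ 2 + L i j * (X i j - Y i j) <=
            lam * g s + rho / 2 * (X i j - s) ^+ 2 + L i j * (X i j - s).
Proof.
move=> H s.
pose Z := \matrix_(p, q) if (p == i) && (q == j) then s else Y p q.
have := H Z; rewrite -subr_ge0 !LagrE (@single _ _ _ _ i j).
  by rewrite /T !mxE !eqxx /= => h; lra.
move=> p q pq; rewrite /Z mxE.
have -> : ((p == i) && (q == j)) = false by apply/negbTE; rewrite negb_and.
by [].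
Qed.

Theorem lemma2 (R : realType) (n K : nat) (A : 'M[R]_n) (lam ell rho : R)
  (g : R -> R) (X Y Lam : nat -> 'M[R]_n) :
  (1 <= K)%N -> (K < n)%N -> 0 < lam -> 0 < ell -> classG g ell ->
  rho = 3 * lam * ell ->
  (* X-update: X_{k+1} is a minimizer of L_rho(., Y_k, Lam_k) over P_K *)
  (forall k : nat, in_PK K (X k.+1) /\
     (forall Z : 'M[R]_n, in_PK K Z ->
        Lagr A lam g rho (X k.+1) (Y k) (Lam k) <= Lagr A lam g rho Z (Y k) (Lam k))) ->
  (* Y-update: Y_{k+1} minimizes L_rho(X_{k+1}, ., Lam_k) over all matrices *)
  (forall (k : nat) (Z : 'M[R]_n),
     Lagr A lam g rho (X k.+1) (Y k.+1) (Lam k) <= Lagr A lam g rho (X k.+1) Z (Lam k)) ->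
  (* multiplier update *)
  (forall k : nat, Lam k.+1 = Lam k + rho *: (X k.+1 - Y k.+1)) ->
  forall k : nat, (1 <= k)%N ->
    Lagr A lam g rho (X k) (Y k) (Lam k) - Lagr A lam g rho (X k.+1) (Y k.+1) (Lam k.+1)
    >= 7 * ell * lam / 6 * frob2 (Y k.+1 - Y k).
Proof.
move=> K1 Kn lam0 ell0 [dg [_ [_ [conv lip]]]] erho hX hY hL [//|k] _.
have st1 := (hX k.+1).2 (X k.+1) (hX k).1.
suff H : 7 * ell * lam / 6 * frob2 (Y k.+2 - Y k.+1) <=
   Lagr A lam g rho (X k.+2) (Y k.+1) (Lam k.+1) - Lagr A lam g rho (X k.+2) (Y k.+2) (Lam k.+2).
  by lra.
rewrite !LagrE -sumrB /frob2 mulr_sumr; apply: ler_sum => i _.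
rewrite -sumrB mulr_sumr; apply: ler_sum => j _.
have el : forall m, Lam m.+1 i j = Lam m i j + rho * (X m.+1 i j - Y m.+1 i j).
  by move=> m; rewrite hL !mxE.
rewrite /T !mxE.
exact: (@pointwise R g lam ell rho (A i j) (X k.+1 i j) (X k.+2 i j) (Y k.+1 i j) (Y k.+2 i j)
  (Lam k i j) (Lam k.+1 i j) (Lam k.+2 i j) lam0 ell0 erho dg conv lip
  (@entry_min _ _ A lam g rho _ _ _ i j (hY k.+1))
  (@entry_min _ _ A lam g rho _ _ _ i j (hY k)) (el k) (el k.+1)).
Qed.
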